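(* Let $d\ge1$. Then (i) $\{\beta(x,z):x\in\mathrm{dS}^d,z\in\Xi_+\}\cap\mathbb R=\{\beta(x,z):x\in\mathrm{dS}^d,z\in\Xi_-\}\cap\mathbb R=(-1,1)$; and (ii) $\mathrm{dS}^d=\partial\Xi_+\cap\partial\Xi_-$ (boundaries taken in $\mathbb C^{1+d}$).
   Context: On $\mathbb C^{1+d}$ let $\beta(z,w)=z_0w_0-z_1w_1-\dots-z_dw_d$ (complex bilinear), $V=\mathbb R^{1+d}$, $V_+=\{x\in V:x_0>0,\beta(x,x)>0\}$, $\mathrm{dS}^d_{\mathbb C}=\{z:\beta(z,z)=-1\}$, $\mathrm{dS}^d=\mathrm{dS}^d_{\mathbb C}\cap V$, and $\Xi_\pm=\mathrm{dS}^d_{\mathbb C}\cap(V\pm iV_+)$. *)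

(* Defs.v *)
From HB Require Import structures.
From mathcomp Require Import all_boot all_order all_algebra.
From mathcomp Require Import all_classical all_reals all_analysis.
From mathcomp Require Import complex.
Import Order.TTheory GRing.Theory Num.Theory numFieldNormedType.Exports.
Local Open Scope ring_scope.
Local Open Scope classical_set_scope.

Set Implicit Arguments.
Unset Strict Implicit.
Unset Printing Implicit Defensive.

(* Standard (modulus-metric) topology on the complex numbers R[i]:
   copied from the regular normed structure R[i]^o. *)
HB.instance Definition _ (R : rcfType) := PseudoPointedMetric.copy R[i] (R[i])^o.

(* Points of C^{1+d} are row vectors 'rV[R[i]]_(d.+1), indexed 0..d.
   The topology on C^{1+d} is the product (matrix) topology. *)

Definition beta (R : rcfType) (d : nat) (z w : 'rV[R[i]]_(d.+1)) : R[i] :=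
  z 0 0 * w 0 0 - \sum_(j < d) z 0 (lift ord0 j) * w 0 (lift ord0 j).

Definition betaR (R : rcfType) (d : nat) (x y : 'rV[R]_(d.+1)) : R :=
  x 0 0 * y 0 0 - \sum_(j < d) x 0 (lift ord0 j) * y 0 (lift ord0 j).

Definition Vplus (R : rcfType) (d : nat) : set 'rV[R]_(d.+1) :=
  [set x : 'rV[R]_(d.+1) | 0 < x 0 0 /\ 0 < betaR x x].
Arguments Vplus R d : clear implicits.

Definition cplx (R : rcfType) (d : nat) (x y : 'rV[R]_(d.+1)) : 'rV[R[i]]_(d.+1) :=
  \row_j Complex (x 0 j) (y 0 j).

Definition realv (R : rcfType) (d : nat) (x : 'rV[R]_(d.+1)) : 'rV[R[i]]_(d.+1) :=
  \row_j ((x 0 j)%:C)%C.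

Definition dSC (R : rcfType) (d : nat) : set 'rV[R[i]]_(d.+1) :=
  [set z : 'rV[R[i]]_(d.+1) | beta z z = -1].
Arguments dSC R d : clear implicits.

Definition dS (R : rcfType) (d : nat) : set 'rV[R[i]]_(d.+1) :=
  dSC R d `&` [set realv x | x in [set: 'rV[R]_(d.+1)]].
Arguments dS R d : clear implicits.

Definition Xiplus (R : rcfType) (d : nat) : set 'rV[R[i]]_(d.+1) :=
  dSC R d `&` [set z : 'rV[R[i]]_(d.+1) | exists x y, Vplus R d y /\ z = cplx x y].
Arguments Xiplus R d : clear implicits.
Definition Ximinus (R : rcfType) (d : nat) : set 'rV[R[i]]_(d.+1) :=
  dSC R d `&` [set z : 'rV[R[i]]_(d.+1) | exists x y, Vplus R d y /\ z = cplx x (- y)].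
Arguments Ximinus R d : clear implicits.

Definition boundary (T : topologicalType) (A : set T) : set T :=
  closure A `\` A°.

(* Main.v *)
Require Import Defs.
From HB Require Import structures.
From mathcomp Require Import all_boot all_order all_algebra.
From mathcomp Require Import all_classical all_reals all_analysis.
From mathcomp Require Import complex.
From mathcomp Require Import ring lra.
Import Order.TTheory GRing.Theory Num.Theory numFieldNormedType.Exports.
Local Open Scope ring_scope.
Local Open Scope classical_set_scope.
Section Alg.
Variable R : realType.
Variable d : nat.
Local Notation V := 'rV[R]_(d.+1).
Implicit Types x y z a b c e : V.

Lemma betaRC x y : betaR x y = betaR y x.
Proof. rewrite /betaR mulrC; congr (_ - _); apply: eq_bigr => j _; exact: mulrC. Qed.

Lemma betaRDl x y z : betaR (x + y) z = betaR x z + betaR y z.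
Proof.
rewrite /betaR !mxE mulrDl.
under eq_bigr do rewrite !mxE mulrDl.
rewrite big_split /=; ring.
Qed.

Lemma betaRZl k x y : betaR (k *: x) y = k * betaR x y.
Proof.
rewrite /betaR !mxE mulrBr mulr_sumr -mulrA.
by under eq_bigr do rewrite !mxE -mulrA.
Qed.

Lemma betaRNl x y : betaR (- x) y = - betaR x y.
Proof. by rewrite -scaleN1r betaRZl mulN1r. Qed.

Lemma betaRDr x y z : betaR z (x + y) = betaR z x + betaR z y.
Proof. by rewrite betaRC betaRDl !(betaRC z). Qed.
Lemma betaRZr k x y : betaR y (k *: x) = k * betaR y x.
Proof. by rewrite betaRC betaRZl betaRC. Qed.
Lemma betaRNr x y : betaR y (- x) = - betaR y x.
Proof. by rewrite betaRC betaRNl betaRC. Qed.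

Lemma sumCx n (f g : 'I_n -> R) :
  \sum_(j < n) ((f j) +i* (g j))%C = ((\sum_(j < n) f j) +i* (\sum_(j < n) g j))%C.
Proof.
elim: n f g => [|n IH] f g; first by rewrite !big_ord0.
by rewrite !big_ord_recr /= IH.
Qed.

Lemma mulCx (p q r s : R) : ((p +i* q) * (r +i* s))%C = ((p * r - q * s) +i* (p * s + q * r))%C.
Proof. by []. Qed.

Lemma betaC a b c e :
  beta (cplx a b) (cplx c e) = ((betaR a c - betaR b e) +i* (betaR a e + betaR b c))%C.
Proof.
rewrite /beta /cplx !mxE mulCx.
under eq_bigr do rewrite !mxE mulCx.
rewrite sumCx /betaR.
rewrite !big_split /= !sumrN.
by apply/eqP; rewrite eq_complex /=; apply/andP; split; apply/eqP; ring.
Qed.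

Lemma realvE x : realv x = cplx x 0.
Proof. by apply/rowP => j; rewrite !mxE. Qed.

Lemma cplx_inj a b c e : cplx a b = cplx c e -> a = c /\ b = e.
Proof.
move=> H; split; apply/rowP => j; have := congr1 (fun M : 'M[R[i]]_(1, d.+1) => M 0 j) H;
  by rewrite !mxE => -[].
Qed.

Lemma timelike_orth w b : Vplus R d b -> betaR w b = 0 -> betaR w w <= 0.
Proof.
move=> [b0 bb] wb; move: bb wb; rewrite /betaR.
set Sbb := \sum_(j < d) _; set Swb := \sum_(j < d) _; set Sw := \sum_(j < d) _.
move=> bb wb.
set t := w 0 0 / b 0 0.
have tb : t * b 0 0 = w 0 0 by rewrite /t mulfVK // gt_eqF.
have H1 : 0 <= \sum_(j < d) (w 0 (lift ord0 j) - t * b 0 (lift ord0 j)) ^+ 2.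
  by apply: sumr_ge0 => j _; exact: sqr_ge0.
have H2 : \sum_(j < d) (w 0 (lift ord0 j) - t * b 0 (lift ord0 j)) ^+ 2
   = Sw - 2 * t * Swb + t ^+ 2 * Sbb.
  rewrite /Sw /Swb /Sbb mulr_sumr mulr_sumr -sumrB -big_split /=.
  by apply: eq_bigr => j _; ring.
have H3 : 0 <= t ^+ 2 * (b 0 0 * b 0 0 - Sbb).
  by apply: mulr_ge0; [exact: sqr_ge0 | lra].
rewrite H2 in H1.
have eSwb : Swb = w 0 0 * b 0 0 by lra.
rewrite eSwb in H1.
have E : t ^+ 2 * (b 0 0 * b 0 0) = w 0 0 * w 0 0 by rewrite -tb; ring.
have E2 : t * (w 0 0 * b 0 0) = w 0 0 * w 0 0 by rewrite -tb; ring.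
nra.
Qed.


Lemma betaR0l y : betaR 0 y = 0.
Proof. by rewrite -(scale0r (0 : V)) betaRZl mul0r. Qed.
Lemma betaR0r y : betaR y 0 = 0.
Proof. by rewrite betaRC betaR0l. Qed.

Lemma dSC_cplx a b : dSC R d (cplx a b) <-> (betaR a a - betaR b b = -1 /\ betaR a b = 0).
Proof.
rewrite /dSC /= betaC (betaRC b a); split.
  move/eqP; rewrite eq_complex /= => /andP [/eqP h1 /eqP h2]; split => //.
  by move: h2; rewrite oppr0; lra.
move=> [h1 h2]; apply/eqP; rewrite eq_complex /= h1 h2 addr0 oppr0 !eqxx //.
Qed.

Lemma timelike_orthN w y : Vplus R d y -> betaR w (- y) = 0 -> betaR w w <= 0.
Proof. by move=> Hy; rewrite betaRNr => /eqP; rewrite oppr_eq0 => /eqP; exact: timelike_orth. Qed.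

Lemma range_sub u a b r : (forall w, betaR w b = 0 -> betaR w w <= 0) ->
  0 < betaR b b -> betaR u u = -1 -> betaR a a - betaR b b = -1 -> betaR a b = 0 ->
  beta (realv u) (cplx a b) = (r%:C)%C -> -1 < r < 1.
Proof.
move=> K bb uu aa ab; rewrite realvE betaC !betaR0l => /eqP; rewrite eq_complex /=.
move=> /andP [/eqP ua /eqP ub]; rewrite subr0 in ua; rewrite addr0 in ub.
have w0 : betaR (a + r *: u) b = 0 by rewrite betaRDl betaRZl ab ub mulr0 addr0.
have := K _ w0; rewrite !betaRDl !betaRDr !betaRZl !betaRZr (betaRC a u) ua uu.
move=> h; apply/andP; split; nra.
Qed.

End Alg.
Section Exist.
Variable R : realType.
Variable d' : nat.
Local Notation d := d'.+1.
Local Notation V := 'rV[R]_(d.+1).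

Definition e0v : V := \row_j ((val j == 0%N)%:R).
Definition e1v : V := \row_j ((val j == 1%N)%:R).

Lemma e1e1 : betaR e1v e1v = -1.
Proof.
rewrite /betaR big_ord_recl big1 /e1v; first by rewrite !mxE /= mul0r sub0r addr0 mulr1.
by move=> j _; rewrite !mxE /= mulr0.
Qed.
Lemma e0e0 : betaR e0v e0v = 1.
Proof.
rewrite /betaR /e0v !mxE /= mulr1 big1 ?subr0 //.
by move=> j _; rewrite !mxE /= mulr0.
Qed.
Lemma e1e0 : betaR e1v e0v = 0.
Proof.
rewrite /betaR /e0v /e1v !mxE /= mul0r big1 ?subr0 //.
by move=> j _; rewrite !mxE /= mulr0.
Qed.

Lemma range_exists r (s : bool) : -1 < r < 1 ->
  exists x z, dS R d x /\ dSC R d z /\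
   (exists a y, Vplus R d y /\ z = cplx a (if s then y else - y)) /\
   beta x z = (r%:C)%C.
Proof.
move=> /andP [r1 r2].
set t := Num.sqrt (1 - r ^+ 2).
have t0 : 0 < t by rewrite sqrtr_gt0; nra.
have tt : t ^+ 2 = 1 - r ^+ 2 by rewrite sqr_sqrtr //; nra.
set y := t *: e0v.
have yV : Vplus R d y.
  split; first by rewrite /y /e0v !mxE /= mulr1.
  by rewrite betaRZl betaRZr e0e0 mulr1 mulr_gt0.
have e1b : betaR e1v (if s then y else - y) = 0.
  by case: s; rewrite ?betaRNr betaRZr e1e0 mulr0 ?oppr0.
have bb : betaR (if s then y else - y) (if s then y else - y) = t ^+ 2.
  by case: (s); rewrite ?betaRNl ?betaRNr ?opprK betaRZl betaRZr e0e0 mulr1 expr2.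
exists (realv e1v), (cplx ((- r) *: e1v) (if s then y else - y)).
split.
  split; last by rewrite /image /=; exists e1v.
  by rewrite /dSC /= realvE; apply/dSC_cplx; rewrite e1e1 betaR0l betaR0r subr0.
split.
  apply/dSC_cplx; rewrite bb betaRZl betaRZr e1e1 betaRZl e1b mulr0.
  by split => //; rewrite tt; ring.
split; first by exists ((- r) *: e1v), y.
rewrite realvE betaC betaRZr e1e1 e1b !betaR0l; apply/eqP.
by rewrite eq_complex /= !addr0 subr0 mulrN1 opprK !eqxx.
Qed.
End Exist.
Section Top.
Variable R : realType.

Lemma normC_ge_Re (w : R[i]) : `|complex.Re w|%:C%C <= `|w|.
Proof.
rewrite normc_def lecR; case: w => a b /=.
by rewrite -sqrtr_sqr ler_wsqrtr // lerDl sqr_ge0.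
Qed.
Lemma normC_ge_Im (w : R[i]) : `|complex.Im w|%:C%C <= `|w|.
Proof.
rewrite normc_def lecR; case: w => a b /=.
by rewrite -sqrtr_sqr ler_wsqrtr // lerDr sqr_ge0.
Qed.

Lemma cont_Re : continuous (fun w : R[i] => complex.Re w).
Proof.
move=> w; apply/(@cvgrPdist_lt _ _ _ _ (@nbhs_filter R[i] w)) => e e0.
exists (e%:C)%C; first by rewrite /= ltcR.
move=> v; rewrite /ball_ /= => h.
have := le_lt_trans (normC_ge_Re (w - v)) h; rewrite ltcR.
by case: w v {h} => a b [c f].
Qed.
Lemma cont_Im : continuous (fun w : R[i] => complex.Im w).
Proof.
move=> w; apply/(@cvgrPdist_lt _ _ _ _ (@nbhs_filter R[i] w)) => e e0.
exists (e%:C)%C; first by rewrite /= ltcR.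
move=> v; rewrite /ball_ /= => h.
have := le_lt_trans (normC_ge_Im (w - v)) h; rewrite ltcR.
by case: w v {h} => a b [c f].
Qed.
Lemma cont_RC : continuous (fun r : R => (r%:C)%C : R[i]).
Proof.
move=> r A /nbhs_ballP [e e0 hA].
apply/nbhs_ballP; exists (complex.Re e).
  by move: e0; rewrite /= ltcE => /andP[].
move=> v; rewrite /ball /= => h; apply: hA.
move: e0 h; rewrite /ball /= ltcE => /andP[/eqP e0 _].
rewrite normc_def /=; case: e e0 => er ei /= -> h.
by rewrite subr0 expr0n /= addr0 sqrtr_sqr ltcE /= eqxx.
Qed.

Lemma cont_sum (T : topologicalType) n (F : 'I_n -> T -> R) :
  (forall j, continuous (F j)) -> continuous (fun t => \sum_(j < n) F j t).
Proof.
elim: n F => [|n IH] F HF.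
  under eq_fun do rewrite big_ord0; exact: cst_continuous.
under eq_fun do rewrite big_ord_recr /=.
move=> x; apply: cvgD; last exact: HF.
by apply: (IH (fun j => F (widen_ord (leqnSn n) j))) => j; exact: HF.
Qed.

Lemma cont_betaR (T : topologicalType) d (f g : T -> 'rV[R]_(d.+1)) :
  (forall j, continuous (fun t => f t 0 j)) -> (forall j, continuous (fun t => g t 0 j)) ->
  continuous (fun t => betaR (f t) (g t)).
Proof.
move=> hf hg x; rewrite /betaR; apply: cvgB; first by apply: cvgM; [exact: hf|exact: hg].
have := @cont_sum T d (fun j t => f t 0 (lift ord0 j) * g t 0 (lift ord0 j)).
by apply => j y; apply: cvgM; [exact: hf|exact: hg].
Qed.

Lemma cont_coord n (j : 'I_n) : continuous (fun z : 'rV[R[i]]_n => z 0 j).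
Proof. exact: coord_continuous. Qed.

Definition reV n (z : 'rV[R[i]]_n) : 'rV[R]_n := \row_j complex.Re (z 0 j).
Definition imV n (z : 'rV[R[i]]_n) : 'rV[R]_n := \row_j complex.Im (z 0 j).
Arguments reV {n}. Arguments imV {n}.

Lemma cont_reV n (j : 'I_n) : continuous (fun z : 'rV[R[i]]_n => reV z 0 j).
Proof.
move=> z; rewrite /reV; under eq_fun do rewrite mxE.
rewrite ?mxE; apply: continuous_comp; [exact: cont_coord | exact: cont_Re].
Qed.
Lemma cont_imV n (j : 'I_n) : continuous (fun z : 'rV[R[i]]_n => imV z 0 j).
Proof.
move=> z; rewrite /imV; under eq_fun do rewrite mxE.
rewrite ?mxE; apply: continuous_comp; [exact: cont_coord | exact: cont_Im].
Qed.
End Top.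
Search "cvg_at_right".
Arguments reV {R n}. Arguments imV {R n}.
Section Part2.
Variable R : realType.
Variable d : nat.
Local Notation V := 'rV[R]_(d.+1).
Local Notation CV := 'rV[R[i]]_(d.+1).

Lemma cplx_decomp (z : CV) : z = cplx (reV z) (imV z).
Proof. by apply/rowP => j; rewrite !mxE; case: (z 0 j). Qed.
Lemma reV_cplx (a b : V) : reV (cplx a b) = a.
Proof. by apply/rowP => j; rewrite !mxE. Qed.
Lemma imV_cplx (a b : V) : imV (cplx a b) = b.
Proof. by apply/rowP => j; rewrite !mxE. Qed.

Lemma closure_sub (T : topologicalType) (A C : set T) : closed C -> A `<=` C -> closure A `<=` C.
Proof. by move=> cC sAC; rewrite [X in _ `<=` X](closure_id C).1 //; exact: closure_subset. Qed.

Definition Cp : set CV :=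
  (fun z => imV z 0 0) @^-1` [set x | 0 <= x] `&`
  (fun z => betaR (imV z) (imV z)) @^-1` [set x | 0 <= x] `&`
  (fun z => betaR (reV z) (reV z) - betaR (imV z) (imV z)) @^-1` [set x | x = -1].
Definition Cm : set CV :=
  (fun z => imV z 0 0) @^-1` [set x | x <= 0] `&`
  (fun z => betaR (imV z) (imV z)) @^-1` [set x | 0 <= x].

Lemma cont_bb (f g : CV -> V) : (forall j, continuous (fun z => f z 0 j)) ->
  (forall j, continuous (fun z => g z 0 j)) -> continuous (fun z => betaR (f z) (g z)).
Proof. exact: cont_betaR. Qed.

Lemma closed_Cp : closed Cp.
Proof.
apply: closedI; first apply: closedI.
- by apply: (continuous_closedP _).1; [exact: cont_imV | exact: closed_ge].
- by apply: (continuous_closedP _).1; [apply: cont_bb => j; exact: cont_imV | exact: closed_ge].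
- apply: (continuous_closedP _).1; last exact: closed_eq.
  have c1 := @cont_bb reV reV (fun j => @cont_reV R _ j) (fun j => @cont_reV R _ j).
  have c2 := @cont_bb imV imV (fun j => @cont_imV R _ j) (fun j => @cont_imV R _ j).
  by move=> z; apply: (cvgB (FF := nbhs_filter z)); [exact: c1 | exact: c2].
Qed.
Lemma closed_Cm : closed Cm.
Proof.
apply: closedI.
- by apply: (continuous_closedP _).1; [exact: cont_imV | exact: closed_le].
- by apply: (continuous_closedP _).1; [apply: cont_bb => j; exact: cont_imV | exact: closed_ge].
Qed.

Lemma Xiplus_Cp : Xiplus R d `<=` Cp.
Proof.
move=> z [hz [a [y [[y0 yy] ez]]]]; subst z.
move/dSC_cplx: hz => [h1 h2].
rewrite /Cp /= !reV_cplx !imV_cplx; split; [split|] => //; exact: ltW.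
Qed.
Lemma Ximinus_Cm : Ximinus R d `<=` Cm.
Proof.
move=> z [hz [a [y [[y0 yy] ez]]]]; subst z.
rewrite /Cm /= !imV_cplx betaRNl betaRNr opprK mxE; split; rewrite ?oppr_le0; exact: ltW.
Qed.

Lemma clos_int z : closure (Xiplus R d) z -> closure (Ximinus R d) z -> dS R d z.
Proof.
move=> /(@closure_sub _ _ _ closed_Cp Xiplus_Cp) [[/= h0 hb] he].
move=> /(@closure_sub _ _ _ closed_Cm Ximinus_Cm) [/= h0' _].
have i0 : imV z 0 0 = 0 by apply/eqP; rewrite eq_le h0 h0'.
have hs : \sum_(j < d) imV z 0 (lift ord0 j) * imV z 0 (lift ord0 j) = 0.
  apply/eqP; rewrite eq_le; apply/andP; split; last by apply: sumr_ge0 => j _; rewrite -expr2 sqr_ge0. 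
  by move: hb; rewrite /betaR i0 mul0r sub0r oppr_ge0.
have iz : imV z = 0.
  apply/rowP => j; rewrite [RHS]mxE.
  case: (unliftP ord0 j) => [k -> | ->] //.
  have H : forall k' : 'I_d, true -> 0 <= imV z 0 (lift ord0 k') * imV z 0 (lift ord0 k').
    by move=> k' _; rewrite -expr2 sqr_ge0.
  have := @psumr_eq0P _ _ _ _ H hs k isT.
  by move/eqP; rewrite mulf_eq0 orbb => /eqP.
have hr : betaR (reV z) (reV z) = -1 by move: he; rewrite iz betaR0l subr0.
rewrite (cplx_decomp z) iz; split; last by exists (reV z) => //; rewrite realvE.
by apply/dSC_cplx; rewrite betaR0l betaR0r subr0.
Qed.
End Part2.
Section Part3.
Variable R : realType.
Variable d : nat.
Local Notation V := 'rV[R]_(d.+1).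
Local Notation CV := 'rV[R[i]]_(d.+1).

Definition tube (s : bool) : set CV :=
  dSC R d `&` [set z | exists a y, Vplus R d y /\ z = cplx a (if s then y else - y)].

Lemma dS_notin s z : dS R d z -> ~ tube s z.
Proof.
move=> [_ [u _ <-]] [_ [a [y [[y0 _]]]]].
rewrite realvE => /cplx_inj [_ h].
have : (0 : V) 0 0 = (if s then y else - y) 0 0 by rewrite h.
by case: s {h}; rewrite !mxE => /eqP; rewrite ?(eq_sym 0 (- _)) ?oppr_eq0 ?(lt_eqF y0) ?(gt_eqF y0).
Qed.

Definition e0g : V := \row_j ((val j == 0%N)%:R).
Lemma e0gl y : betaR e0g y = y 0 0.
Proof.
rewrite /betaR /e0g !mxE /= mul1r big1 ?subr0 //.
by move=> j _; rewrite !mxE /= mul0r.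
Qed.

Lemma dS_closure s x : dS R d x -> closure (tube s) x.
Proof.
move=> [hx [u _ ex]]; subst x.
have uu : betaR u u = -1.
  by move: hx; rewrite /dSC /= realvE => /dSC_cplx [+ _]; rewrite betaR0l subr0.
set c := 1 + u 0 0 * u 0 0.
have c1 : 1 <= c by rewrite /c lerDl -expr2 sqr_ge0.
have c0 : 0 < c by apply: lt_le_trans c1.
set b := e0g + u 0 0 *: u.
have bu : betaR u b = 0.
  by rewrite betaRC betaRDl betaRZl e0gl uu; ring.
have bb : betaR b b = c.
  rewrite {2}/b betaRDr betaRZr (@betaRC _ _ b e0g) e0gl (@betaRC _ _ b u) bu mulr0 addr0.
  by rewrite /b !mxE /=.
have b0 : b 0 0 = c by rewrite /b !mxE /=.
set sg : R := if s then 1 else -1.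
set sq := fun e : R => Num.sqrt (1 - e * e * c).
pose phi := fun e : R => (((sq e)%:C)%C *: realv u + (((sg * e)%:C)%C * 'i%C) *: realv b : CV).
have phiE : forall e, phi e = cplx (sq e *: u) (if s then e *: b else - (e *: b)).
  move=> e; apply/rowP => j; rewrite /phi /sg !mxE; case: (s); rewrite !mxE;
  by apply/eqP; rewrite eq_complex /=; apply/andP; split; apply/eqP; ring.
have key : forall e, 0 < e -> e < c^-1 -> tube s (phi e).
  move=> e e0 ec.
  have ec' : e * c < 1 by rewrite -(ltr_pM2r c0) mulVf ?gt_eqF // in ec.
  have h1 : 0 <= 1 - e * e * c by nra.
  have sq2 : sq e * sq e = 1 - e * e * c by rewrite /sq -expr2 sqr_sqrtr.
  rewrite phiE; split.
    apply/dSC_cplx; case: (s);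
      rewrite ?betaRNl ?betaRNr ?opprK !betaRZl !betaRZr uu bb bu !mulr0 ?oppr0;
      split => //; rewrite mulrN1 mulrN sq2; ring.
  exists (sq e *: u), (e *: b); split => //; split.
    by rewrite mxE b0 mulr_gt0.
  by rewrite betaRZl betaRZr bb !mulr_gt0.
have csq : (fun e => sq e) @ (0 : R) --> sq 0.
  apply: (continuous_comp (f := fun e : R => 1 - e * e * c)); last exact: sqrt_continuous.
  by apply: cvgB; [exact: cvg_cst | apply: cvgM; [apply: cvgM; exact: cvg_id | exact: cvg_cst]].
have cphi : phi e @[e --> (0 : R)] --> phi 0.
  apply: cvgD; apply: cvgZ; try exact: cvg_cst.
    apply: (continuous_comp (f := sq)) => //; exact: cont_RC.
  apply: cvgM; last exact: cvg_cst.
  apply: (continuous_comp (f := fun e => sg * e)); last exact: cont_RC.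
  by apply: cvgM; [exact: cvg_cst | exact: cvg_id].
have phi0 : phi 0 = realv u.
  rewrite /phi /sq !mul0r subr0 sqrtr1 mulr0.
  by rewrite (_ : (1%:C)%C = 1) // (_ : (0%:C)%C = 0) // mul0r scale0r addr0 scale1r.
rewrite -phi0 => B nB.
have hB : \forall e \near (0 : R)^'+, B (phi e) by apply: (cvg_at_right_filter cphi).
have hK : \forall e \near (0 : R)^'+, tube s (phi e).
  near=> e; apply: key.
    by near: e; exact: nbhs_right_gt.
  by near: e; apply: nbhs_right_lt; rewrite invr_gt0.
have [e [he1 he2]] := @filter_ex _ _ (at_right_proper_filter (0 : R)) _ (filterI hK hB).
by exists (phi e).
Unshelve. all: by end_near.
Qed.
End Part3.
Theorem mainTheorem20 (R : realType) (d : nat) (hd : (1 <= d)%N) :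
  ([set r : R | exists x z, dS R d x /\ Xiplus R d z /\ beta x z = (r%:C)%C]
     = `]-1, 1[%classic
   /\ [set r : R | exists x z, dS R d x /\ Ximinus R d z /\ beta x z = (r%:C)%C]
     = `]-1, 1[%classic)
  /\ dS R d = boundary (Xiplus R d) `&` boundary (Ximinus R d).
Proof.
have uuE : forall u : 'rV[R]_(d.+1), dSC R d (realv u) -> betaR u u = -1.
  by move=> u; rewrite realvE => /dSC_cplx [+ _]; rewrite betaR0l subr0.
split; first split.
- apply/seteqP; split => r /=.
    move=> [x [z [[hx [u _ ex]] [[hz [a [y [Vy ez]]]] hb]]]]; subst x z.
    move/dSC_cplx: hz => [h1 h2]; rewrite in_itv /=.
    apply: (@range_sub R d u a y r _ _ (uuE _ hx) h1 h2 hb).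
      by move=> w; exact: timelike_orth.
    by case: Vy.
  rewrite in_itv /= => hr.
  case: d hd uuE => [//|d'] _ _.
  have [x [z [hx [hz [ez hb]]]]] := @range_exists R d' r true hr.
  by exists x, z; split => //; split => //; split.
- apply/seteqP; split => r /=.
    move=> [x [z [[hx [u _ ex]] [[hz [a [y [Vy ez]]]] hb]]]]; subst x z.
    move/dSC_cplx: hz => [h1 h2]; rewrite in_itv /=.
    apply: (@range_sub R d u a (- y) r _ _ (uuE _ hx) h1 h2 hb).
      by move=> w; exact: timelike_orthN.
    by rewrite betaRNl betaRNr opprK; case: Vy.
  rewrite in_itv /= => hr.
  case: d hd uuE => [//|d'] _ _.
  have [x [z [hx [hz [ez hb]]]]] := @range_exists R d' r false hr.
  by exists x, z; split => //; split => //; split.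
- apply/seteqP; split => x.
    move=> hx; split; split.
    + exact: (@dS_closure R d true x hx).
    + by move/interior_subset; exact: (@dS_notin R d true x hx).
    + exact: (@dS_closure R d false x hx).
    + by move/interior_subset; exact: (@dS_notin R d false x hx).
  by move=> [[c1 _] [c2 _]]; exact: clos_int.
Qed.
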